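(* Let $p,q,d,n$ be positive integers with $p>2q$ and $d\ge 3$, let $s$ be a special vertex of $U^n_{p,q,d}$ and let $\ell$ be an integer with $1\le \ell\le \bigl\lceil \tfrac{q}{p-2q}\bigr\rceil-1$. Then the set of vertices of $U^n_{p,q,d}$ at distance exactly $\ell$ from $s$ is an independent set.
   Context: For integers $1\le q\le p$, the Kneser graph $K_{p/q}$ has as vertices all $q$-element subsets of $[p]=\{1,\dots,p\}$, two being adjacent iff they are disjoint. The extension product of graphs $G$ and $H$ has vertex set $V(G)\times V(H)$, with $(u,v)$ adjacent to $(u',v')$ iff $uu'\in E(G)$ and either $v=v'$ or $vv'\in E(H)$. Let $N=n\binom{p}{q}$. If $d$ is even, let $S$ be the star $K_{1,N}$ with each edge subdivided $d/2-1$ times, and let $U^n_{p,q,d}$ be the extension product of $K_{p/q}$ and $S$. If $d$ is odd, let $L$ be the graph obtained from the clique $K_N$ by identifying each clique vertex with one endpoint of its own path on $(d+1)/2$ vertices (the other endpoints being the leaves of $L$), and let $U^n_{p,q,d}$ be the extension product of $K_{p/q}$ and $L$. In both cases the $N$ leaves $\lambda$ of $S$ (resp. $L$) are partitioned into $\binom pq$ groups of $n$ leaves indexed by the $q$-subsets $X$ of $[p]$, and for each leaf $\lambda$ in the group of $X$ the vertex $(X,\lambda)$ is called special. *)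

(* Defs.v *)
From mathcomp Require Import all_boot.
Unset Printing Implicit Defensive.

(* Vertices of the Kneser graph K_{p/q}: q-element subsets of [p] = 'I_p. *)
Definition Kv (p q : nat) : finType := {X : {set 'I_p} | #|X| == q}.

Definition kneser_rel (p q : nat) : rel (Kv p q) :=
  fun X Y => [disjoint val X & val Y].

Definition ext_rel {G H : finType} (eG : rel G) (eH : rel H) : rel (G * H) :=
  fun a b => eG a.1 b.1 && ((a.2 == b.2) || eH a.2 b.2).

(* Subdivided star: center None; branch i has vertices Some (i,j), j < m,
   with Some (i,0) adjacent to the center, Some (i,j) ~ Some (i,j+1);
   the leaf of branch i is Some (i, m-1).  Each edge of K_{1,N} is
   subdivided m-1 times (m = d/2). *)
Definition star_rel (I : finType) (m : nat) : rel (option (I * 'I_m)) :=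
  fun a b =>
    match a, b with
    | None, None => false
    | None, Some (_, j) => val j == 0
    | Some (_, j), None => val j == 0
    | Some (i, j), Some (k, l) =>
        (i == k) && ((val l == (val j).+1) || (val j == (val l).+1))
    end.

(* The graph L: clique on the vertices (i,0), and for each i a path
   (i,0),(i,1),...,(i,m-1) on m = (d+1)/2 vertices; leaf of i is (i, m-1). *)
Definition L_rel (I : finType) (m : nat) : rel (I * 'I_m) :=
  fun a b =>
    ((val a.2 == 0) && (val b.2 == 0) && (a.1 != b.1))
    || ((a.1 == b.1) && ((val b.2 == (val a.2).+1) || (val a.2 == (val b.2).+1))).

Definition NN (p q n : nat) : nat := n * 'C(p, q).

Definition U_even (p q d n : nat) :=
  ext_rel (kneser_rel p q) (star_rel 'I_(NN p q n) d./2).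
Definition U_odd (p q d n : nat) :=
  ext_rel (kneser_rel p q) (L_rel 'I_(NN p q n) (d.+1)./2).

Definition walk_len {T : finType} (e : rel T) (s x : T) (l : nat) : Prop :=
  exists w : seq T, [/\ path e s w, last s w = x & size w = l].

Definition dist_eq {T : finType} (e : rel T) (s x : T) (l : nat) : Prop :=
  walk_len e s x l /\ forall k, k < l -> ~ walk_len e s x k.

Definition sphere_independent {T : finType} (e : rel T) (s : T) (l : nat) : Prop :=
  forall x y, dist_eq e s x l -> dist_eq e s y l -> ~~ e x y.

Definition ceil_div (a b : nat) : nat := (a + b - 1) %/ b.

(* Main.v *)
Require Import Defs.
From mathcomp Require Import all_boot.
From mathcomp Require Import zify.

Definition Pinv p q (X0 : Kv p q) k (U : Kv p q) :=
  if odd k then #|val X0 :&: val U| <= k./2 * (p - 2*q)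
  else #|val X0 :\: val U| <= k./2 * (p - 2*q).

Arguments Pinv {p q}.

Lemma cardK p q (U : Kv p q) : #|val U| = q.
Proof. exact: (eqP (valP U)). Qed.

Lemma card_union2 p q (U V : Kv p q) : @kneser_rel p q U V -> #|val U :|: val V| = 2 * q.
Proof.
move=> hUV; rewrite cardsU (disjoint_setI0 hUV) cards0 !cardK; lia.
Qed.

Lemma notboth p q (U V : Kv p q) x : @kneser_rel p q U V -> x \in val U -> x \in val V -> False.
Proof.
move=> hUV hU hV; have := congr1 (fun A : {set 'I_p} => x \in A) (disjoint_setI0 hUV).
by rewrite /= inE hU hV in_set0.
Qed.

Arguments notboth {p q U V x}.
Arguments card_union2 {p q U V}.

Lemma step p q (X0 U V : Kv p q) k : 2 * q < p ->
  Pinv X0 k U -> @kneser_rel p q U V -> Pinv X0 k.+1 V.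
Proof.
move=> hpq; rewrite /Pinv /=; case hk: (odd k) => /= hP hUV.
- have hs : val X0 :\: val V \subset (val X0 :&: val U) :|: ~: (val U :|: val V).
    apply/subsetP => x; rewrite !inE.
    by case: (x \in val X0); case: (x \in val U); case: (x \in val V).
  have h1 := subset_leq_card hs.
  have h2 := cardsU (val X0 :&: val U) (~: (val U :|: val V)).
  have h3 := cardsC (val U :|: val V).
  rewrite card_union2 // card_ord in h3.
  have e : (k.+1)./2 = (k./2).+1 by move: hk; lia.
  move: h1 h2 h3 e; rewrite /=; lia.
- have hs : val X0 :&: val V \subset val X0 :\: val U.
    apply/subsetP => x; rewrite !inE => /andP [-> hV]; rewrite andbT.
    by apply/negP => hU; apply: (notboth hUV hU hV).
  have h1 := subset_leq_card hs.
  have e : (k.+1)./2 = k./2 by move: hk; lia.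
  move: h1 e; rewrite /=; lia.
Qed.

Arguments step {p q X0 U V k}.

Lemma reach p q (X0 U : Kv p q) (w : seq (Kv p q)) k : 2 * q < p ->
  path (@kneser_rel p q) U w -> Pinv X0 k U -> Pinv X0 (k + size w) (last U w).
Proof.
move=> hpq; elim: w U k => [|V w IH] U k /=; first by rewrite addn0.
move=> /andP [hUV hw] hP; rewrite addnS -addSn; apply: IH => //.
exact: step hP hUV.
Qed.

Arguments reach {p q} X0 {U w k}.

Lemma key p q l (X0 Y Z : Kv p q) : 2 * q < p -> l * (p - 2 * q) < q ->
  Pinv X0 l Y -> Pinv X0 l Z -> @kneser_rel p q Y Z -> False.
Proof.
move=> hpq hl; rewrite /Pinv; case hk: (odd l) => hY hZ hYZ.
- have hs : val Y :|: val Z \subset (val X0 :&: val Y) :|: (val X0 :&: val Z) :|: ~: val X0.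
    apply/subsetP => x; rewrite !inE.
    by case: (x \in val X0); case: (x \in val Y); case: (x \in val Z).
  have h1 := subset_leq_card hs.
  rewrite card_union2 // in h1.
  have h2 := cardsU ((val X0 :&: val Y) :|: (val X0 :&: val Z)) (~: val X0).
  have h3 := cardsU (val X0 :&: val Y) (val X0 :&: val Z).
  have h4 := cardsC (val X0). rewrite card_ord cardK in h4.
  have e : l = (l./2).*2.+1 by move: hk; lia.
  rewrite e in hl. nia.
- have hs : val X0 \subset (val X0 :\: val Y) :|: (val X0 :\: val Z).
    apply/subsetP => x; rewrite !inE => hx; rewrite hx /= !andbT.
    case hy: (x \in val Y) => //=; apply/negP => hz; exact: (notboth hYZ hy hz).
  have h1 := subset_leq_card hs.
  have h2 := cardsU (val X0 :\: val Y) (val X0 :\: val Z).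
  rewrite cardK in h1.
  have e : l = (l./2).*2 by move: hk; lia.
  rewrite e in hl. nia.
Qed.

Arguments key {p q l X0 Y Z}.

Lemma indep p q (H : finType) (eH : rel H) (s : Kv p q * H) l :
  2 * q < p -> l * (p - 2 * q) < q ->
  sphere_independent (ext_rel (@kneser_rel p q) eH) s l.
Proof.
move=> hpq hl x y [[w [hw hx hs]] _] [[w' [hw' hy hs']] _].
apply/negP => /andP [hxy _].
have proj : forall (v : seq (Kv p q * H)) a,
    path (ext_rel (@kneser_rel p q) eH) a v -> path (@kneser_rel p q) a.1 (map fst v).
  elim=> [|b v IH] a //= /andP [/andP [hab _] hv]; rewrite hab /=; exact: IH.
have P0 : Pinv s.1 0 s.1 by rewrite /Pinv /= setDv cards0.
have hX := reach s.1 hpq (proj _ _ hw) P0.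
have hY := reach s.1 hpq (proj _ _ hw') P0.
rewrite /= size_map hs last_map hx in hX.
rewrite /= size_map hs' last_map hy in hY.
exact: (key hpq hl hX hY hxy).
Qed.

Theorem mainTheorem4 (p q d n : nat)
  (hp : 0 < p) (hq : 0 < q) (hd : 0 < d) (hn : 0 < n)
  (hpq : 2 * q < p) (hd3 : 3 <= d)
  (grp : 'I_(NN p q n) -> Kv p q)
  (hgrp : forall X : Kv p q, #|[set i | grp i == X]| = n)
  (l : nat) (hl1 : 1 <= l) (hl2 : l <= ceil_div q (p - 2 * q) - 1) :
  (~~ odd d ->
     forall (i : 'I_(NN p q n)) (j : 'I_(d./2)), val j = (d./2).-1 ->
       sphere_independent (U_even p q d n) (grp i, Some (i, j)) l)
  /\
  (odd d ->
     forall (i : 'I_(NN p q n)) (j : 'I_((d.+1)./2)), val j = ((d.+1)./2).-1 ->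
       sphere_independent (U_odd p q d n) (grp i, (i, j)) l).
Proof.
have hc : 0 < p - 2 * q by lia.
have hl : l * (p - 2 * q) < q.
  have h1 : l.+1 <= (q + (p - 2 * q) - 1) %/ (p - 2 * q) by rewrite /ceil_div in hl2; lia.
  rewrite leq_divRL // in h1.
  rewrite mulSn in h1; lia.
split=> _ i j _; exact: indep.
Qed.
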